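(* Let $p$ be a prime, $e\ge1$, and $G$ a finite abelian group of order $p^e$. Let $\psi^p\colon\mathbf{Z}[G]\to\mathbf{Z}[G]$ be the ring homomorphism with $\psi^p(g)=g^p$, and let $h(t)=\frac{1}{1-t}\left(p-\frac{1-t^p}{1-t}\right)$, a polynomial of degree $p-2$. Then $$\psi^p(b_1)=b_1+\sum_{\tau\neq1,\ \psi\tau=1}h(y_\tau)\,b_\tau,$$ where the sum runs over one representative $\tau$ of each equivalence class of nontrivial representations with $\psi\tau=1$.
   Context: A representation is a group homomorphism $\tau\colon G\to\mathbf{C}^*$; two representations are equivalent if they have the same kernel. $\psi\tau$ is the representation $x\mapsto\tau(x^p)$, and $1$ denotes the trivial representation. Write $\omega=\exp(2\pi i/p)$. For $\tau$ nontrivial, $b_\tau=\sum_{x\in G,\ \tau(x)=1}x-\sum_{\xi\in G,\ \tau(\xi)=\omega}\xi$ and $y_\tau\in G$ is a fixed element with $\tau(y_\tau)=\omega$; $b_1=\sum_{x\in G}x$. *)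

(* Defs.v *)
From HB Require Import structures.
From mathcomp Require Import all_boot all_order all_algebra all_fingroup all_field.
Set Implicit Arguments. Unset Strict Implicit. Unset Printing Implicit Defensive.
Import GRing.Theory Num.Theory.
Local Open Scope ring_scope.

(* Z[G] is modelled as integer-valued functions on gT (supported on G). *)
Section GroupRing.
Variables (gT : finGroupType) (G : {group gT}).

Definition gr_delta (y : gT) : {ffun gT -> int} := [ffun x => ((x == y) : nat)%:Z].

Definition gr_mul (f g : {ffun gT -> int}) : {ffun gT -> int} :=
  [ffun z => \sum_(x in G) f x * g (x^-1 * z)%g].

Definition gr_psi (p : nat) (f : {ffun gT -> int}) : {ffun gT -> int} :=
  [ffun z => \sum_(x in G | (x ^+ p)%g == z) f x].

Definition gr_peval (q : {poly int}) (y : gT) : {ffun gT -> int} :=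
  [ffun x => \sum_(k < size q) q`_k * gr_delta (y ^+ k)%g x].

(* representations G -> C^* (C taken as algebraic complex numbers) *)
Definition is_rep (tau : gT -> algC) : Prop :=
  (forall x, x \in G -> tau x != 0) /\
  (forall x y, x \in G -> y \in G -> tau (x * y)%g = tau x * tau y).

Definition rep_ker (tau : gT -> algC) : {set gT} := [set x in G | tau x == 1].

Definition rep_trivial (tau : gT -> algC) : Prop := forall x, x \in G -> tau x = 1.

Definition psi_rep_trivial (p : nat) (tau : gT -> algC) : Prop :=
  forall x, x \in G -> tau (x ^+ p)%g = 1.

(* omega = exp(2 pi i / p): p.-root (-1) is exp(i pi / p) *)
Definition omega (p : nat) : algC := (p.-root (-1)) ^+ 2.

Definition b1 : {ffun gT -> int} := [ffun x => ((x \in G) : nat)%:Z].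

Definition b_rep (p : nat) (tau : gT -> algC) : {ffun gT -> int} :=
  [ffun x => (((x \in G) && (tau x == 1)) : nat)%:Z
            - (((x \in G) && (tau x == omega p)) : nat)%:Z].

End GroupRing.

Definition hpoly (p : nat) : {poly int} :=
  ((p%:Z)%:P - \sum_(j < p) 'X^j) %/ (1 - 'X).

(* Main.v *)
Require Import Defs.
From HB Require Import structures.
From mathcomp Require Import all_boot all_order all_algebra all_fingroup all_field.
From mathcomp Require Import all_solvable all_character.
From mathcomp Require Import ring zify.
Import GRing.Theory Num.Theory.
Local Open Scope ring_scope.


Lemma omega_prim p : prime p -> p.-primitive_root (omega p).
Proof.
move=> pr; have p1 := prime_gt1 pr; have p0 := prime_gt0 pr.
pose r : algC := p.-root (-1).
have rp : r ^+ p = -1 by rewrite /r rootCK.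
have wp : omega p ^+ p = 1 by rewrite /omega -/r exprAC rp sqrrN expr1n.
have [m pm mdvd] := prim_order_exists p0 wp.
have := (prime_nt_dvdP pr); case/boolP: (m == 1%N) => [/eqP m1 | mn1] H.
  exfalso; move: pm; rewrite m1 => /prim_expr_order; rewrite expr1 /omega -/r => r21.
  have : (r - 1) * (r + 1) = 0 by rewrite mulrDr mulr1 mulrBl mul1r -expr2 r21; ring.
  move/eqP; rewrite mulf_eq0 subr_eq0 => /orP[/eqP r1|].
    by move: rp; rewrite r1 expr1n => /eqP; rewrite -subr_eq0 opprK (eqr_nat _ 2 0).
  rewrite addr_eq0 => /eqP rm1.
  have h : (r < 0) = false by exact: rootC_lt0.
  by rewrite rm1 ltrN10 in h.
have e : m = p by apply/(H m mn1).
by rewrite e in pm.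
Qed.

Set Implicit Arguments. Unset Strict Implicit.


Section Reps.
Variables (gT : finGroupType) (G : {group gT}).

Lemma rep1 f : is_rep G f -> f 1%g = 1.
Proof.
case=> nz M; have := M 1%g 1%g (group1 G) (group1 G); rewrite mulg1 => h.
have := nz _ (group1 G); move: h; set a := f 1%g => h nza.
by apply: (mulfI nza); rewrite mulr1 -h.
Qed.

Lemma repX f x k : is_rep G f -> x \in G -> f (x ^+ k)%g = f x ^+ k.
Proof.
move=> fr xG; elim: k => [|k IH]; first by rewrite expg0 expr0 (rep1 fr).
by rewrite expgS exprS fr.2 ?groupX // IH.
Qed.

Lemma repV f x : is_rep G f -> x \in G -> f (x^-1)%g = (f x)^-1.
Proof.
move=> fr xG; have := fr.2 _ _ xG (groupVr xG); rewrite mulgV (rep1 fr) => h.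
have nz := fr.1 _ xG.
by apply: (mulfI nz); rewrite -h divff.
Qed.

Lemma rep_sum f : is_rep G f ->
  \sum_(x in G) f x = if [forall x in G, f x == 1] then #|G|%:R else 0.
Proof.
move=> fr; case: ifP => [/forall_inP h | /negbT].
  by rewrite (eq_bigr (fun _ => 1)) ?sumr_const // => x /h /eqP.
rewrite negb_forall_in => /exists_inP [g gG fg1].
set S := \sum_(x in G) f x.
have : S = f g * S.
  rewrite {1}/S (reindex_inj (mulgI g)) /= /S mulr_sumr.
  rewrite (eq_bigl (fun x => x \in G)); last by move=> x; rewrite groupMl.
  by apply: eq_bigr => x xG; rewrite fr.2.
move/eqP; rewrite -subr_eq0 -{1}(mul1r S) -mulrBl mulf_eq0 subr_eq0 eq_sym.
by rewrite (negbTE fg1) => /eqP.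
Qed.


Hypothesis abG : abelian G.

Lemma comm_ab x y : x \in G -> y \in G -> commute x y.
Proof. by move=> xG yG; apply: (centsP abG). Qed.

Lemma chi_rep (i : Iirr G) : is_rep G ('chi_i).
Proof.
have lin := char_abelianP G abG i.
by split=> [x xG | x y xG yG]; [exact: lin_char_neq0 | exact: lin_charM].
Qed.

Lemma second_ab x y : x \in G -> y \in G ->
  \sum_i 'chi[G]_i x * ('chi_i y)^* = #|G|%:R *+ (x == y).
Proof.
move=> xG yG; rewrite second_orthogonality_relation //.
have -> : ('C_G[x] = G)%g.
  apply/setIidPl; rewrite sub_cent1; exact: (subsetP abG).
by rewrite ((abelian_classP _ abG) y yG) inE.
Qed.


Lemma chiX_rep (i : Iirr G) p : is_rep G (fun x => 'chi_i (x ^+ p)%g).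
Proof.
have [nz M] := chi_rep i.
split=> [x xG | x y xG yG]; first by apply: nz; rewrite groupX.
rewrite expgMn; last exact: comm_ab.
by rewrite M ?groupX.
Qed.

Lemma Gnz : (#|G|%:R : algC) != 0.
Proof. by rewrite pnatr_eq0 -lt0n cardG_gt0. Qed.

Lemma count_roots p z : z \in G ->
  (\sum_(x in G | (x ^+ p)%g == z) 1 : algC) =
  \sum_(i | [forall x in G, 'chi[G]_i (x ^+ p)%g == 1]) 'chi_i z.
Proof.
move=> zG; apply: (mulfI Gnz).
rewrite mulr_sumr mulr1 big_mkcondr /=.
rewrite (eq_bigr (fun x => \sum_i 'chi[G]_i z * ('chi_i (x ^+ p)%g)^*)); last first.
  by move=> x xG; rewrite second_ab ?groupX // eq_sym; case: eqP.
rewrite exchange_big /= mulr_sumr [RHS]big_mkcond /=; apply: eq_bigr => i _.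
rewrite -mulr_sumr.
have -> : \sum_(x in G) ('chi_i (x ^+ p)%g)^* = \sum_(x in G) 'chi_i (x ^+ p)%g.
  rewrite (reindex_inj invg_inj) /=.
  rewrite (eq_bigl (fun x => x \in G)); last by move=> x; rewrite groupV.
  apply: eq_bigr => x xG.
  rewrite -lin_charV_conj ?groupX ?groupV ?(char_abelianP G abG) //.
  by rewrite expgVn invgK.
have := rep_sum (chiX_rep i p); rewrite /= => ->.
by case: ifP; rewrite ?mulr0 ?mul0r // mulrC.
Qed.

Lemma exists_chi f : is_rep G f -> exists i : Iirr G, forall x, x \in G -> 'chi_i x = f x.
Proof.
move=> fr.
case/boolP: [exists i : Iirr G, [forall x in G, 'chi_i x == f x]].
  by case/existsP=> i /forall_inP h; exists i => x /h /eqP.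
rewrite negb_exists => /forallP H; exfalso.
have: \sum_i \sum_(x in G) f x * ('chi[G]_i x)^* = #|G|%:R.
  rewrite exchange_big /=.
  rewrite (eq_bigr (fun x => f x * (#|G|%:R *+ (1%g == x)))); last first.
    move=> x xG; rewrite -second_ab ?group1 // mulr_sumr.
    by apply: eq_bigr => i _; rewrite lin_char1 ?(char_abelianP G abG) // mul1r.
  rewrite (bigD1 1%g) ?group1 //= eqxx mulr1n (rep1 fr) mul1r big1 ?addr0 //.
  by move=> x /andP[_ /negbTE]; rewrite eq_sym => ->; rewrite mulr0n mulr0.
rewrite big1; first by move/eqP; rewrite eq_sym (negbTE Gnz).
move=> i _.
have gr : is_rep G (fun x => f x * ('chi_i x)^*).
  have [nz M] := chi_rep i; have [fnz fM] := fr.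
  split=> [x xG | x y xG yG].
    by rewrite mulf_neq0 ?fnz // conjC_eq0 nz.
  by rewrite fM // M // rmorphM; ring.
rewrite (rep_sum gr); case: ifP => // /forall_inP h.
move: (H i) => /forall_inP; case=> x xG.
have := h x xG; rewrite -lin_charV_conj ?(char_abelianP G abG) //.
rewrite (repV (chi_rep i)) // => /eqP e.
apply/eqP; have nz := (chi_rep i).1 x xG.
by rewrite -[f x]mulr1 -(mulVf nz) mulrA e mul1r.
Qed.

End Reps.


Lemma sum_ind (R : nzRingType) N (k : nat) : \sum_(j < N) ((k == j :> nat)%:R : R) = (k < N)%N%:R.
Proof.
elim: N => [|N IH]; first by rewrite big_ord0 ltn0.
rewrite big_ord_recr /= IH ltnS.
by case: (ltngtP k N) => h; rewrite /= ?addr0 ?add0r.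
Qed.

Definition Hp (p : nat) : {poly int} := \poly_(k < p.-1) ((p.-1 - k)%N%:Z).

Lemma hpolyE p : (1 < p)%N -> hpoly p = Hp p.
Proof.
move=> p1; rewrite /hpoly.
have -> : (p%:Z)%:P - \sum_(j < p) 'X^j = Hp p * (1 - 'X).
  apply/polyP => k.
  rewrite coefB coefC coef_sum (eq_bigr (fun j : 'I_p => ((k == j :> nat)%:R : int))); last first.
    by move=> j _; rewrite coefXn.
  rewrite sum_ind mulrBr mulr1 coefB coefMX !coef_poly.
  case: k => [|k] /=.
    case: p p1 => [|[|p]] //= _. rewrite subn0 /=; lia.
  case: (ltnP k.+1 p.-1) => h1; case: (ltnP k p.-1) => h2; case: (ltnP k.+1 p) => h3; lia.
rewrite Pdiv.IdomainUnit.mulpK //.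
have -> : (1 : {poly int}) - 'X = - ('X - 1%:P) by rewrite opprB.
by rewrite lead_coefN lead_coefXsubC unitrN unitr1.
Qed.


Section Main.
Variables (p : nat) (gT : finGroupType) (G : {group gT}) (n : nat)
  (T : 'I_n -> gT -> algC) (y : 'I_n -> gT).
Hypothesis pr : prime p.
Hypothesis abG : abelian G.
Hypothesis HT : forall i, [/\ is_rep G (T i), ~ rep_trivial G (T i) & psi_rep_trivial G p (T i)].
Hypothesis Hcls : forall tau, is_rep G tau -> ~ rep_trivial G tau -> psi_rep_trivial G p tau ->
     #|[set i : 'I_n | rep_ker G (T i) == rep_ker G tau]| = 1%N.
Hypothesis Hy : forall i, y i \in G /\ T i (y i) = omega p.

Local Notation w := (omega p).
Let wprim : p.-primitive_root w := omega_prim p pr.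

Lemma w_neq0 : w != 0.
Proof. by rewrite (prim_root_eq0 wprim) -lt0n prime_gt0. Qed.

Lemma Trep j : is_rep G (T j). Proof. by case: (HT j). Qed.

Lemma Tpow j x : x \in G -> T j x ^+ p = 1.
Proof. by move=> xG; rewrite -(repX _ (Trep j) xG); case: (HT j) => _ _; apply. Qed.

Lemma Texp j x : x \in G -> {m : 'I_p | T j x = w ^+ m}.
Proof. by move=> xG; apply: prim_rootP wprim _ (Tpow j xG). Qed.

Lemma step_a j f : is_rep G f -> (forall x, x \in G -> f x ^+ p = 1) ->
  rep_ker G f = rep_ker G (T j) -> exists a : 'I_p, forall x, x \in G -> f x = T j x ^+ a.
Proof.
move=> fr fp hk; have [yG Ty] := Hy j.
have [a fa] := prim_rootP wprim (fp _ yG).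
exists a => x xG; have [m Tm] := Texp j xG.
have u : (x * ((y j) ^+ m)^-1)%g \in rep_ker G (T j).
  rewrite inE groupM ?groupV ?groupX //=.
  rewrite (Trep j).2 ?groupV ?groupX // (repV (Trep j)) ?groupX //.
  by rewrite (repX _ (Trep j)) // Ty Tm mulfV // expf_neq0 ?w_neq0.
move: u; rewrite -hk inE groupM ?groupV ?groupX //= fr.2 ?groupV ?groupX //.
rewrite (repV fr) ?groupX // (repX _ fr) // fa => /eqP h.
have nz : w ^+ a ^+ m != 0 by apply/expf_neq0/expf_neq0/w_neq0.
by rewrite Tm -exprM mulnC exprM -[f x]mulr1 -(mulVf nz) mulrA h mul1r.
Qed.


Lemma powrep j (a : nat) : is_rep G (fun x => T j x ^+ a).
Proof.
have [nz M] := Trep j; split=> [x xG | x z xG zG]; first by apply/expf_neq0/nz.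
by rewrite M // exprMn.
Qed.

Lemma wX1 (k : nat) : (w ^+ k == 1) = (p %| k)%N.
Proof. by rewrite (prim_order_dvd wprim). Qed.

Lemma kerpow j (a : 'I_p) : a != 0 :> nat ->
  rep_ker G (fun x => T j x ^+ a) = rep_ker G (T j).
Proof.
move=> a0; apply/setP => x; rewrite !inE; case xG: (x \in G) => //=.
have [m Tm] := Texp j xG; rewrite Tm -exprM !wX1 Euclid_dvdM //.
have : ~~ (p %| a)%N.
  apply/negP => /dvdn_leq; rewrite lt0n a0 => /(_ isT); rewrite leqNgt ltn_ord //.
by move/negbTE => ->; rewrite orbF.
Qed.

Lemma chi_eq (i i' : Iirr G) : (forall x, x \in G -> 'chi_i x = 'chi_i' x) -> i = i'.
Proof.
move=> h; apply: irr_inj; apply/cfunP => x.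
by case xG: (x \in G); [exact: h | rewrite !cfun0 ?xG].
Qed.

Lemma chi_triv (i : Iirr G) : (forall x, x \in G -> 'chi_i x = 1) -> i = 0.
Proof. by move=> h; apply: chi_eq => x xG; rewrite h // irr0 cfun1E xG. Qed.


Lemma rep_ker_ext f g : (forall x, x \in G -> f x = g x) -> rep_ker G f = rep_ker G g.
Proof. by move=> h; apply/setP => x; rewrite !inE; case xG: (x \in G); rewrite //= h. Qed.

Definition Qp (i : Iirr G) (ja : 'I_n * 'I_p) :=
  (ja.2 != 0 :> nat) && [forall x in G, 'chi[G]_i x == T ja.1 x ^+ ja.2].
Definition Pp (i : Iirr G) := [forall x in G, 'chi[G]_i (x ^+ p)%g == 1].

Lemma uniqT j j' : rep_ker G (T j') = rep_ker G (T j) -> j' = j.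
Proof.
move=> e; have [tr ntr ps] := HT j.
have /cards1P [k hk] : #|[set i : 'I_n | rep_ker G (T i) == rep_ker G (T j)]| == 1%N.
  by rewrite (Hcls tr ntr ps).
have : j \in [set i : 'I_n | rep_ker G (T i) == rep_ker G (T j)] by rewrite inE.
have : j' \in [set i : 'I_n | rep_ker G (T i) == rep_ker G (T j)] by rewrite inE e.
by rewrite hk !inE => /eqP -> /eqP ->.
Qed.

Lemma U1 i : Pp i -> i != 0 -> exists ja, Qp i ja /\ forall ja', Qp i ja' -> ja' = ja.
Proof.
move=> Pi i0; have cr := chi_rep abG i.
have ntr : ~ rep_trivial G ('chi_i).
  by move=> h; move/eqP: i0; apply; apply: chi_triv.
have psi : psi_rep_trivial G p ('chi_i) by move=> x xG; apply/eqP; move/forall_inP: Pi; apply.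
have /cards1P [j hj] : #|[set k : 'I_n | rep_ker G (T k) == rep_ker G ('chi_i)]| == 1%N.
  by rewrite (Hcls cr ntr psi).
have : j \in [set k : 'I_n | rep_ker G (T k) == rep_ker G ('chi_i)] by rewrite hj set11.
rewrite inE => /eqP kj.
have [a ha] := step_a cr (fun x xG => etrans (esym (repX _ cr xG)) (psi x xG)) (esym kj).
have a0 : a != 0 :> nat.
  apply/negP => /eqP a0; apply: ntr => x xG; by rewrite ha // a0 expr0.
exists (j, a); split.
  by rewrite /Qp /= a0; apply/forall_inP => x xG; rewrite ha.
case=> j' a' /andP [/= a'0 /forall_inP h'].
have h'' : forall x, x \in G -> 'chi_i x = T j' x ^+ a' by move=> x /h' /eqP.
have ej : j' = j.
  apply: uniqT; rewrite -(kerpow j' a'0) -(rep_ker_ext h'') kj //.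
move: h''; rewrite ej => h''.
have [yG Ty] := Hy j.
have : w ^+ a' == w ^+ a by rewrite -Ty -ha // h''.
rewrite (eq_prim_root_expr wprim) !modn_small ?ltn_ord // => /eqP ea.
by congr (_, _); apply: val_inj.
Qed.

Lemma U2 (ja : 'I_n * 'I_p) : ja.2 != 0 :> nat -> exists i, (Pp i && (i != 0) && Qp i ja) /\ forall i', Qp i' ja -> i' = i.
Proof.
case: ja => j a /= a0.
have [i hi] := exists_chi abG (powrep j a).
have [yG Ty] := Hy j.
exists i; split.
  apply/andP; split; first (apply/andP; split).
  - apply/forall_inP => x xG; rewrite hi ?groupX // (repX _ (Trep j)) //.
    by rewrite Tpow // expr1n.
  - apply/negP => /eqP i0; move: (hi _ yG); rewrite i0 irr0 cfun1E yG Ty => /eqP.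
    rewrite eq_sym wX1 => /dvdn_leq; rewrite lt0n a0 => /(_ isT); rewrite leqNgt ltn_ord.
    done.
  - by rewrite /Qp /= a0; apply/forall_inP => x xG; rewrite hi.
move=> i' /andP [_ /forall_inP h']; apply: chi_eq => x xG.
by rewrite hi //; apply/eqP; apply: h'.
Qed.


Lemma sum_unique (I : finType) (P : pred I) (F : I -> algC) x0 :
  P x0 -> (forall x, P x -> x = x0) -> \sum_(x | P x) F x = F x0.
Proof.
move=> Px0 u; rewrite (bigD1 x0) //= big1 => [|x /andP [Px ne]]; first by rewrite addr0.
by move: ne; rewrite (u x Px) eqxx.
Qed.

Lemma geo (t : algC) : t ^+ p = 1 ->
  \sum_(a < p | a != 0 :> nat) t ^+ a = p%:R * (t == 1)%:R - 1.
Proof.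
move=> tp; have p0 := prime_gt0 pr.
have e : \sum_(a < p) t ^+ a = 1 + \sum_(a < p | a != 0 :> nat) t ^+ a.
  by rewrite (bigD1 (Ordinal p0)) //= expr0.
apply: (addrI 1); rewrite -e addrC subrK.
case: eqP => [-> | /eqP t1].
  by rewrite (eq_bigr (fun _ => 1)) ?sumr_const ?card_ord ?mulr1 // => a _; rewrite expr1n.
rewrite mulr0; apply/eqP; move: (subrX1 t p); rewrite tp subrr => /esym/eqP.
by rewrite mulf_eq0 subr_eq0 (negbTE t1).
Qed.

Lemma B3 z : z \in G ->
  \sum_(i | Pp i) 'chi[G]_i z = 1 + \sum_(j < n) (p%:R * (T j z == 1)%:R - 1).
Proof.
move=> zG.
rewrite (bigD1 0) /=; last by apply/forall_inP => x xG; rewrite irr0 cfun1E groupX.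
rewrite irr0 cfun1E zG; congr (_ + _).
rewrite (eq_bigr (fun i => \sum_(ja | Qp i ja) T ja.1 z ^+ ja.2)); last first.
  move=> i /andP [Pi i0]; have [ja [Q u]] := U1 Pi i0.
  rewrite (sum_unique _ Q u); case/andP: Q => _ /forall_inP h.
  by apply/eqP; apply: h.
rewrite (exchange_big_dep (fun ja : 'I_n * 'I_p => ja.2 != 0 :> nat)) /=; last first.
  by move=> i ja _ /andP [].
rewrite (eq_bigr (fun ja : 'I_n * 'I_p => T ja.1 z ^+ ja.2)); last first.
  move=> ja ja0; have [i [hi u]] := U2 ja0.
  rewrite (@sum_unique _ (fun i => Pp i && (i != 0) && Qp i ja) (fun _ => T ja.1 z ^+ ja.2) i hi) // => i' /andP [_ Q].
  exact: u.
rewrite (eq_bigr (fun j => \sum_(a < p | a != 0 :> nat) T j z ^+ a)); last first.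
  by move=> j _; rewrite geo // Tpow.
by rewrite pair_big_dep.
Qed.


Lemma pick_sum N (F : nat -> int) (m : nat) :
  \sum_(k < N) F k * (m == k :> nat)%:R = (m < N)%N%:R * F m.
Proof.
elim: N => [|N IH]; first by rewrite big_ord0 ltn0 mul0r.
rewrite big_ord_recr /= IH ltnS.
case: (ltngtP m N) => h; rewrite /= ?mulr0 ?addr0 ?mul0r ?add0r ?mul1r ?mulr1 //.
by rewrite h.
Qed.

Lemma divw a b c : (w ^+ a * (w ^+ b)^-1 == w ^+ c) = (w ^+ a == w ^+ (c + b)).
Proof.
have nz : w ^+ b != 0 by apply/expf_neq0/w_neq0.
rewrite exprD; apply/eqP/eqP => [<- | ->]; by rewrite ?divfK ?mulfK.
Qed.

Lemma convA j z : z \in G ->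
  gr_mul G (gr_peval (hpoly p) (y j)) (b_rep G p (T j)) z = p%:Z * (T j z == 1)%:Z - 1.
Proof.
move=> zG; have [yG Ty] := Hy j; have p1 := prime_gt1 pr.
rewrite hpolyE // /gr_mul /gr_peval ffunE.
set H := Hp p.
rewrite (eq_bigr (fun x => \sum_(k < size H) H`_k * gr_delta (y j ^+ k)%g x *
                         b_rep G p (T j) (x^-1 * z)%g)); last first.
  by move=> x _; rewrite ffunE mulr_suml.
rewrite exchange_big /=.
rewrite (eq_bigr (fun k : 'I_(size H) => H`_k * b_rep G p (T j) ((y j ^+ k)^-1 * z)%g)); last first.
  move=> k _; rewrite (bigD1 (y j ^+ k)%g) ?groupX //= big1 ?addr0.
    by rewrite /gr_delta ffunE eqxx mulr1.
  by move=> x /andP [_ ne]; rewrite /gr_delta ffunE (negbTE ne) mulr0 mul0r.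
have sH : (size H <= p.-1)%N by apply: size_poly.
rewrite (big_ord_widen _ (fun k => H`_k * b_rep G p (T j) ((y j ^+ k)^-1 * z)%g) sH).
rewrite big_mkcond /=.
rewrite (eq_bigr (fun k : 'I_p.-1 => H`_k * b_rep G p (T j) ((y j ^+ k)^-1 * z)%g)); last first.
  by move=> k _; case: ifP => // ks; rewrite nth_default ?mul0r // leqNgt ks.
have [m Tm] := Texp j zG.
rewrite (eq_bigr (fun k : 'I_p.-1 => (p.-1 - k)%N%:Z * ((m == k :> nat)%:R - (m == k.+1 :> nat)%:R))); last first.
  move=> k _; have kp := ltn_ord k.
  rewrite /H /Hp coef_poly kp; congr (_ * _).
  rewrite /b_rep ffunE groupM ?groupV ?groupX //=.
  rewrite (Trep j).2 ?groupV ?groupX // (repV (Trep j)) ?groupX // (repX _ (Trep j)) // Ty Tm.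
  have e0 := divw m k 0; rewrite expr0 add0n in e0.
  have e1 := divw m k 1; rewrite expr1 add1n in e1.
  rewrite mulrC e0 e1 (eq_prim_root_expr wprim) (eq_prim_root_expr wprim).
  rewrite !modn_small; try lia.
  by case: (m == k :> nat); case: (m == k.+1 :> nat).
rewrite (eq_bigr (fun k : 'I_p.-1 => (p.-1 - k)%N%:Z * (m == k :> nat)%:R -
                                     (p.-1 - k)%N%:Z * (m == k.+1 :> nat)%:R)); last first.
  by move=> k _; rewrite mulrBr.
rewrite sumrB (pick_sum _ (fun k => (p.-1 - k)%N%:Z)).
have -> : (T j z == 1) = (m == 0%N :> nat).
  rewrite Tm wX1; apply/idP/idP => [/dvdn_leq | /eqP ->]; last by rewrite dvdn0.
  by case: (nat_of_ord m) (ltn_ord m) => // m' mp /(_ isT); rewrite leqNgt mp.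
case: (nat_of_ord m) (ltn_ord m) => [|m'] mp.
  rewrite big1 ?subr0; last by move=> k _; rewrite mulr0.
  rewrite /= subn0.
  have hp0 : (0 < p.-1)%N by lia.
  rewrite hp0 mul1r; lia.
rewrite (eq_bigr (fun k : 'I_p.-1 => (p.-1 - k)%N%:Z * (m' == k :> nat)%:R)); last first.
  by move=> k _.
rewrite (pick_sum _ (fun k => (p.-1 - k)%N%:Z)) /=.
case: (ltnP m'.+1 p.-1) => h1; case: (ltnP m' p.-1) => h2 /=; lia.
Qed.

Lemma convA0 j z : z \notin G ->
  gr_mul G (gr_peval (hpoly p) (y j)) (b_rep G p (T j)) z = 0.
Proof.
move=> zG; rewrite /gr_mul ffunE big1 // => x xG.
by rewrite /b_rep !ffunE groupMl ?groupV // (negbTE zG) /= subrr mulr0.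
Qed.


Lemma final_eq :
  gr_psi G p (b1 G) =
    b1 G + \sum_(i < n) gr_mul G (gr_peval (hpoly p) (y i)) (b_rep G p (T i)).
Proof.
apply/ffunP => z; rewrite /gr_psi ffunE.
rewrite [in RHS]ffunE sum_ffunE.
case zG: (z \in G); last first.
  rewrite big_pred0; last first.
    by move=> x; apply/negP => /andP [xG /eqP e]; move: zG; rewrite -e groupX.
  by rewrite /b1 ffunE zG add0r big1 // => j _; apply: convA0; rewrite zG.
rewrite (eq_bigr (fun _ => 1 : int)); last by move=> x /andP [xG _]; rewrite /b1 ffunE xG.
rewrite /b1 ffunE zG (eq_bigr (fun j => p%:Z * (T j z == 1)%:Z - 1)); last first.
  by move=> j _; apply: convA.
apply: (@intr_inj algC).
have := count_roots abG p zG; rewrite B3 // => h.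
rewrite rmorph_sum /= (eq_bigr (fun _ => 1)) ?h; last by move=> x _; rewrite rmorph1.
rewrite rmorphD rmorph_sum /= rmorph1; congr (_ + _); apply: eq_bigr => j _.
by rewrite rmorphB rmorphM rmorph1 /=; case: (T j z == 1).
Qed.

End Main.

Unset Implicit Arguments.

Theorem mainTheorem6 (p e : nat) (gT : finGroupType) (G : {group gT})
  (n : nat) (T : 'I_n -> gT -> algC) (y : 'I_n -> gT) :
  prime p -> (0 < e)%N -> abelian G -> #|G| = (p ^ e)%N ->
  (forall i, [/\ is_rep G (T i), ~ rep_trivial G (T i) & psi_rep_trivial G p (T i)]) ->
  (forall tau, is_rep G tau -> ~ rep_trivial G tau -> psi_rep_trivial G p tau ->
     #|[set i : 'I_n | rep_ker G (T i) == rep_ker G tau]| = 1%N) ->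
  (forall i, y i \in G /\ T i (y i) = omega p) ->
  gr_psi G p (b1 G) =
    b1 G + \sum_(i < n) gr_mul G (gr_peval (hpoly p) (y i)) (b_rep G p (T i)).
Proof.
move=> pr _ abG _ HT Hcls Hy.
exact: (final_eq pr abG HT Hcls Hy).
Qed.
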